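(* In the setting described in the context, for every node $p\in\mathcal{V}_h^C\cup\mathcal{M}_h^C$ with $u^h_1(p)\neq0$ (a non actual contact node), $$\langle\lambda^h,\phi_pe_1\rangle_h=0.$$
   Context: Let $\Omega\subset\mathbb{R}^2$ be a bounded polygonal Lipschitz domain with boundary partitioned into relatively open, pairwise disjoint parts $\Gamma_D,\Gamma_N,\Gamma_C$, $\mathrm{meas}(\Gamma_D)>0$, $\overline{\Gamma_C}\subset\partial\Omega\setminus\overline{\Gamma_D}$, outward unit normal on $\Gamma_C$ equal to $e_1=(1,0)$. Let $\sigma(v)=\chi\,\mathrm{tr}(\epsilon(v))I+2\mu\epsilon(v)$ ($\chi,\mu>0$, $\epsilon(v)=\frac12(\nabla v+\nabla v^T)$), $a(w,v)=\int_\Omega\sigma(w):\epsilon(v)\,dx$, $L(v)=\int_\Omega f\cdot v\,dx+\int_{\Gamma_N}g\cdot v\,ds$, $f\in[L^2(\Omega)]^2$, $g\in[L^2(\Gamma_N)]^2$. Let $\mathcal{T}_h$ be a regular triangulation of $\Omega$ (each of $\Gamma_D,\Gamma_N,\Gamma_C$ a union of mesh edges); $\mathcal{V}_h,\mathcal{M}_h$ vertices and edge midpoints; $\mathcal{V}_h^C$ vertices in $\overline{\Gamma_C}$, $\mathcal{M}_h^C$ midpoints of edges on $\Gamma_C$; $\mathcal{V}_h^D,\mathcal{M}_h^D$ analogously for $\Gamma_D$; $\mathcal{V}_h^o=\mathcal{V}_h\setminus\mathcal{V}_h^D$, $\mathcal{M}_h^o=\mathcal{M}_h\setminus\mathcal{M}_h^D$.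 $V^h=\{v\in[C(\overline\Omega)]^2: v|_T\in[P_2(T)]^2,\ v=0\text{ on }\Gamma_D\}$ with scalar quadratic Lagrange basis $\psi_z$, $z\in\mathcal{V}_h^o\cup\mathcal{M}_h^o$. $\mathcal{K}^h=\{v^h=(v^h_1,v^h_2)\in V^h: v^h_1(z)\le0\ \forall z\in\mathcal{V}_h^C\cup\mathcal{M}_h^C\}$; $u^h=(u^h_1,u^h_2)\in\mathcal{K}^h$ solves $a(u^h,v^h-u^h)\ge L(v^h-u^h)$ $\forall v^h\in\mathcal{K}^h$. $Q^h$ = continuous $\mathbb{R}^2$-valued functions on $\overline{\Gamma_C}$ affine on each half of each contact edge (edges split at midpoints), scalar nodal basis $\phi_z$, $z\in\mathcal{V}_h^C\cup\mathcal{M}_h^C$. $\omega_z$ = union of elements sharing $z$, $\gamma_{z,C}=\partial\omega_z\cap\Gamma_C$. $\pi_h v=\sum_{z\in\mathcal{V}_h^C\cup\mathcal{M}_h^C}\sum_iv_i(z)\psi_ze_i$; $\langle w,v\rangle_h=\sum_{z\in\mathcal{V}_h^C\cup\mathcal{M}_h^C}w(z)\cdot v(z)\int_{\gamma_{z,C}}\phi_z\,ds$; $\lambda^h\in Q^h$ defined by $\langle\lambda^h,v^h\rangle_h=L(\pi_hv^h)-a(u^h,\pi_hv^h)$ for all $v^h\in Q^h$. *)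

(* Defs.v *)
From HB Require Import structures.
From mathcomp Require Import all_boot all_order all_algebra.
From mathcomp Require Import all_classical all_reals all_analysis.
Set Implicit Arguments. Unset Strict Implicit. Unset Printing Implicit Defensive.
Import Order.TTheory GRing.Theory Num.Theory.
Import numFieldNormedType.Exports.
Local Open Scope classical_set_scope.
Local Open Scope ring_scope.

Section FEM.
Variable R : realType.
Notation pt := (R * R)%type.

Definition vadd (x y : pt) : pt := (x.1 + y.1, x.2 + y.2).
Definition vsub (x y : pt) : pt := (x.1 - y.1, x.2 - y.2).
Definition vscale (t : R) (x : pt) : pt := (t * x.1, t * x.2).
Definition vdot (x y : pt) : R := x.1 * y.1 + x.2 * y.2.
Definition e1 : pt := (1, 0).
Definition e2 : pt := (0, 1).

Definition triangle := (pt * pt * pt)%type.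
Definition tv1 (t : triangle) : pt := t.1.1.
Definition tv2 (t : triangle) : pt := t.1.2.
Definition tv3 (t : triangle) : pt := t.2.
Definition tverts (t : triangle) : seq pt := [:: tv1 t; tv2 t; tv3 t].

Definition nondegenerate (t : triangle) : Prop :=
  let u := vsub (tv2 t) (tv1 t) in let w := vsub (tv3 t) (tv1 t) in
  u.1 * w.2 - u.2 * w.1 != 0.

Definition ctri (t : triangle) : set pt :=
  [set x | exists l1 l2 l3 : R, [/\ 0 <= l1, 0 <= l2, 0 <= l3, l1 + l2 + l3 = 1 &
     x = vadd (vscale l1 (tv1 t)) (vadd (vscale l2 (tv2 t)) (vscale l3 (tv3 t)))]].

Definition edge := (pt * pt)%type.
Definition seg (e : edge) (s : R) : pt := vadd e.1 (vscale s (vsub e.2 e.1)).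
Definition csegm (e : edge) : set pt := [set x | exists2 s, 0 <= s <= 1 & x = seg e s].
Definition elen (e : edge) : R := Num.sqrt (vdot (vsub e.2 e.1) (vsub e.2 e.1)).
Definition midpoint (e : edge) : pt := seg e (2^-1).

Definition tedges (t : triangle) : seq edge :=
  [:: (tv1 t, tv2 t); (tv2 t, tv3 t); (tv3 t, tv1 t)].

Definition mesh := seq triangle.

Definition has_vertex (t : triangle) (z : pt) : bool := z \in tverts t.

Definition is_mesh_edge (T : mesh) (e : edge) : Prop :=
  exists2 t, t \in T & ((e \in tedges t) \/ ((e.2, e.1) \in tedges t)).

(* boundary edges: edges belonging to exactly one element *)
Definition bedges (T : mesh) : seq edge :=
  flatten [seq [seq e <- tedges t |
      ~~ has (fun t' => (t' != t) && has_vertex t' e.1 && has_vertex t' e.2) T]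
    | t <- T].

Definition regular_triangulation (T : mesh) : Prop :=
  uniq T /\ (forall t, t \in T -> nondegenerate t) /\
  (forall t t', t \in T -> t' \in T -> t != t' ->
     [\/ ctri t `&` ctri t' = set0,
         exists2 v, (v \in tverts t) && (v \in tverts t') & ctri t `&` ctri t' = [set v]
       | exists v w, [/\ v != w, (v \in tverts t) && (v \in tverts t'),
                         (w \in tverts t) && (w \in tverts t') &
                         ctri t `&` ctri t' = csegm (v, w)]]).

Definition mesh_union (T : mesh) : set pt := \bigcup_(t in [set` T]) ctri t.
Definition Omega (T : mesh) : set pt := interior (mesh_union T).
Definition bdry (A : set pt) : set pt := closure A `\` interior A.

Definition lipschitz_fun (g : R -> R) : Prop :=
  exists K : R, forall a b, `|g a - g b| <= K * `|a - b|.

(* locally (near every boundary point) the domain lies below the graph of a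
   Lipschitz function, in a rotated Cartesian frame *)
Definition lipschitz_domain (O : set pt) : Prop :=
  forall x, bdry O x ->
  exists (r c s : R) (g : R -> R), [/\ 0 < r, c ^+ 2 + s ^+ 2 = 1, lipschitz_fun g &
    forall y, vdot (vsub y x) (vsub y x) < r ^+ 2 ->
      (O y <-> (s * y.1 + c * y.2) < g (c * y.1 - s * y.2))].

Definition rel_open (B A : set pt) : Prop := exists2 U, open U & A = U `&` B.

Definition union_of_edges (T : mesh) (A : set pt) : Prop :=
  exists E : seq edge, (forall e, e \in E -> is_mesh_edge T e /\ csegm e `<=` bdry (Omega T))
    /\ closure A = \bigcup_(e in [set` E]) csegm e.

Definition vertices (T : mesh) : seq pt := undup (flatten [seq tverts t | t <- T]).
Definition midpoints (T : mesh) : seq pt :=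
  undup (flatten [seq [seq midpoint e | e <- tedges t] | t <- T]).
Definition is_node (T : mesh) (z : pt) : bool := (z \in vertices T) || (z \in midpoints T).

Definition VhC (T : mesh) (GC : set pt) : seq pt :=
  [seq z <- vertices T | `[< closure GC z >]].
Definition MhC (T : mesh) (GC : set pt) : seq pt :=
  [seq midpoint e | e <- bedges T & `[< csegm e `<=` closure GC >]].
Definition cnodes (T : mesh) (GC : set pt) : seq pt := undup (VhC T GC ++ MhC T GC).

Definition P2_on (A : set pt) (v : pt -> R) : Prop :=
  exists c0 c1 c2 c3 c4 c5 : R, forall x, A x ->
    v x = c0 + c1 * x.1 + c2 * x.2 + c3 * x.1 ^+ 2 + c4 * (x.1 * x.2) + c5 * x.2 ^+ 2.

Definition scalar_P2 (T : mesh) (v : pt -> R) : Prop :=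
  {within closure (Omega T), continuous v} /\ (forall t, t \in T -> P2_on (ctri t) v).

Definition Vh (T : mesh) (GD : set pt) (v : pt -> pt) : Prop :=
  scalar_P2 T (fun x => (v x).1) /\ scalar_P2 T (fun x => (v x).2) /\
  (forall x, GD x -> v x = (0, 0)).

Definition Kh (T : mesh) (GD GC : set pt) (v : pt -> pt) : Prop :=
  Vh T GD v /\ (forall z, z \in cnodes T GC -> (v z).1 <= 0).

Definition lagrange_basis (T : mesh) (z : pt) (psiz : pt -> R) : Prop :=
  scalar_P2 T psiz /\
  (forall z', is_node T z' -> psiz z' = if z' == z then 1 else 0).

Definition affine_on_seg (e : edge) (w : pt -> R) : Prop :=
  exists c d : R, forall s, 0 <= s <= 1 -> w (seg e s) = c + s * d.

Definition contact_edges (T : mesh) (GC : set pt) : seq edge :=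
  [seq e <- bedges T | `[< csegm e `<=` closure GC >]].
Definition half_edges (T : mesh) (GC : set pt) : seq edge :=
  flatten [seq [:: (e.1, midpoint e); (midpoint e, e.2)] | e <- contact_edges T GC].

Definition scalar_Q (T : mesh) (GC : set pt) (w : pt -> R) : Prop :=
  {within closure GC, continuous w} /\
  (forall e, e \in half_edges T GC -> affine_on_seg e w).

Definition Qh (T : mesh) (GC : set pt) (w : pt -> pt) : Prop :=
  scalar_Q T GC (fun x => (w x).1) /\ scalar_Q T GC (fun x => (w x).2).

Definition Q_basis (T : mesh) (GC : set pt) (z : pt) (phiz : pt -> R) : Prop :=
  scalar_Q T GC phiz /\
  (forall z', z' \in cnodes T GC -> phiz z' = if z' == z then 1 else 0).

Definition leb2 := ((@lebesgue_measure R) \x (@lebesgue_measure R))%E.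

Definition area_int (A : set pt) (F : pt -> R) : R := \int[leb2]_(x in A) F x.

Definition line_int (T : mesh) (S : set pt) (F : pt -> R) : R :=
  \sum_(e <- bedges T)
     elen e * (\int[@lebesgue_measure R]_(s in [set s | 0 <= s <= 1 /\ S (seg e s)])
                 F (seg e s)).

Definition pd (v : pt -> R) (j : pt) (x : pt) : R := derive v x j.

(* sigma(w) : eps(v) *)
Definition sig_eps (chi mu : R) (w v : pt -> pt) (x : pt) : R :=
  let w11 := pd (fun y => (w y).1) e1 x in
  let w22 := pd (fun y => (w y).2) e2 x in
  let w12 := (pd (fun y => (w y).1) e2 x + pd (fun y => (w y).2) e1 x) / 2 in
  let v11 := pd (fun y => (v y).1) e1 x in
  let v22 := pd (fun y => (v y).2) e2 x in
  let v12 := (pd (fun y => (v y).1) e2 x + pd (fun y => (v y).2) e1 x) / 2 in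
  chi * (w11 + w22) * (v11 + v22) + 2 * mu * (w11 * v11 + w22 * v22 + 2 * (w12 * v12)).

Definition bil_a (T : mesh) (chi mu : R) (w v : pt -> pt) : R :=
  area_int (Omega T) (sig_eps chi mu w v).

Definition lin_L (T : mesh) (GN : set pt) (f g : pt -> pt) (v : pt -> pt) : R :=
  area_int (Omega T) (fun x => vdot (f x) (v x)) + line_int T GN (fun x => vdot (g x) (v x)).

Definition L2_dom (A : set pt) (f : pt -> pt) : Prop :=
  measurable_fun A (fun x => (f x).1) /\ measurable_fun A (fun x => (f x).2) /\
  (\int[leb2]_(x in A) ((vdot (f x) (f x))%:E) < +oo)%E.

Definition L2_bdry (T : mesh) (S : set pt) (g : pt -> pt) : Prop :=
  forall e, e \in bedges T ->
    let D := [set s : R | 0 <= s <= 1 /\ S (seg e s)] in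
    measurable_fun D (fun s => (g (seg e s)).1) /\
    measurable_fun D (fun s => (g (seg e s)).2) /\
    (\int[@lebesgue_measure R]_(s in D) ((vdot (g (seg e s)) (g (seg e s)))%:E) < +oo)%E.

Definition omega_z (T : mesh) (z : pt) : set pt :=
  \bigcup_(t in [set t | t \in T /\ ctri t z]) ctri t.
Definition gamma_zC (T : mesh) (GC : set pt) (z : pt) : set pt :=
  bdry (omega_z T z) `&` GC.

Definition disc_pair (T : mesh) (GC : set pt) (phi : pt -> pt -> R) (w v : pt -> pt) : R :=
  \sum_(z <- cnodes T GC) vdot (w z) (v z) * line_int T (gamma_zC T GC z) (phi z).

Definition pi_h (T : mesh) (GC : set pt) (psi : pt -> pt -> R) (v : pt -> pt) : pt -> pt :=
  fun x => (\sum_(z <- cnodes T GC) (v z).1 * psi z x,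
            \sum_(z <- cnodes T GC) (v z).2 * psi z x).

End FEM.

(* Main.v *)
Require Import Defs.
From HB Require Import structures.
From mathcomp Require Import all_boot all_order all_algebra.
From mathcomp Require Import all_classical all_reals all_analysis.
From mathcomp Require Import ring lra.
Import Order.TTheory GRing.Theory Num.Theory.
Import numFieldNormedType.Exports.
Local Open Scope classical_set_scope.
Local Open Scope ring_scope.
Set Implicit Arguments. Unset Strict Implicit.

Lemma peq (R : Type) (x y : R*R) : x.1 = y.1 -> x.2 = y.2 -> x = y.
Proof. by case: x; case: y => ? ? ? ? /= -> ->. Qed.

Lemma contw_lin (R : realType) (A : set (R*R)) (f g : R*R -> R) (k : R) :
  {within A, continuous f} -> {within A, continuous g} ->
  {within A, continuous (fun x => f x + k * g x)}.
Proof.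
move=> /subspace_continuousP hf /subspace_continuousP hg.
apply/subspace_continuousP => x Ax.
apply: cvgD; first exact: hf.
apply: cvgM; [exact: cvg_cst | exact: hg].
Qed.

Lemma contw_cst (R : realType) (A : set (R*R)) (k : R) :
  {within A, continuous (fun _ : R*R => k)}.
Proof. apply: continuous_subspaceT => x; exact: cvg_cst. Qed.

Lemma ctri_vert (R : realType) (t : triangle R) v : v \in tverts t -> ctri t v.
Proof.
rewrite !inE => /or3P [] /eqP ->.
- exists 1, 0, 0; split => //; first lra.
  by rewrite /vadd /vscale /=; apply: peq => /=; ring.
- exists 0, 1, 0; split => //; first lra.
  by rewrite /vadd /vscale /=; apply: peq => /=; ring.
- exists 0, 0, 1; split => //; first lra.
  by rewrite /vadd /vscale /=; apply: peq => /=; ring.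
Qed.

Lemma ctri_seg (R : realType) (t : triangle R) a b s :
  ctri t a -> ctri t b -> 0 <= s <= 1 -> ctri t (seg (a, b) s).
Proof.
move=> [a1 [a2 [a3 [h1 h2 h3 hs ->]]]] [b1 [b2 [b3 [g1 g2 g3 gs ->]]]] /andP[s0 s1].
exists ((1-s)*a1 + s*b1), ((1-s)*a2 + s*b2), ((1-s)*a3 + s*b3); split.
- apply: addr_ge0; apply: mulr_ge0 => //; lra.
- apply: addr_ge0; apply: mulr_ge0 => //; lra.
- apply: addr_ge0; apply: mulr_ge0 => //; lra.
- have -> : (1 - s) * a1 + s * b1 + ((1 - s) * a2 + s * b2) + ((1 - s) * a3 + s * b3)
    = (1 - s) * (a1 + a2 + a3) + s * (b1 + b2 + b3) by ring.
  rewrite hs gs; ring.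
- by rewrite /seg /vadd /vscale /vsub /=; apply: peq => /=; ring.
Qed.

Lemma quad0 (R : realType) (a b c : R) :
  a + b * 0 + c * 0 ^+ 2 = 0 -> a + b * 1 + c * 1 ^+ 2 = 0 ->
  a + b * 2^-1 + c * (2^-1) ^+ 2 = 0 -> forall s, a + b * s + c * s ^+ 2 = 0.
Proof.
rewrite !expr2 => h0 h1 h2 s.
have ea : a = 0 by lra.
have ec : c = 0 by lra.
have eb : b = 0 by lra.
by rewrite ea eb ec; ring.
Qed.

Lemma contw_scale (R : realType) (A : set (R*R)) (g : R*R -> R) (k : R) :
  {within A, continuous g} -> {within A, continuous (fun x => k * g x)}.
Proof.
move=> /subspace_continuousP hg; apply/subspace_continuousP => x Ax.
apply: cvgM; [exact: cvg_cst | exact: hg].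
Qed.

Lemma P2_lin (R : realType) (A : set (R*R)) (f g : R*R -> R) (k : R) :
  P2_on A f -> P2_on A g -> P2_on A (fun x => f x + k * g x).
Proof.
move=> [a0 [a1 [a2 [a3 [a4 [a5 hf]]]]]] [b0 [b1 [b2 [b3 [b4 [b5 hg]]]]]].
exists (a0 + k * b0), (a1 + k * b1), (a2 + k * b2), (a3 + k * b3), (a4 + k * b4), (a5 + k * b5).
by move=> x Ax; rewrite hf // hg //; ring.
Qed.

Lemma P2_seg_zero (R : realType) (A : set (R*R)) (v : R*R -> R) (e : edge R) :
  P2_on A v -> (forall s, 0 <= s <= 1 -> A (seg e s)) ->
  v e.1 = 0 -> v e.2 = 0 -> v (midpoint e) = 0 ->
  forall s, 0 <= s <= 1 -> v (seg e s) = 0.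
Proof.
case: e => [[a1 a2] [b1 b2]] /=.
move=> [c0 [c1 [c2 [c3 [c4 [c5 hv]]]]]] hA h0 h1 hm.
set dx := b1 - a1; set dy := b2 - a2.
have key : forall s, 0 <= s <= 1 -> v (seg ((a1, a2), (b1, b2)) s) =
   (c0 + c1 * a1 + c2 * a2 + c3 * a1 ^+ 2 + c4 * (a1 * a2) + c5 * a2 ^+ 2)
 + (c1 * dx + c2 * dy + 2 * c3 * a1 * dx + c4 * (a1 * dy + a2 * dx) + 2 * c5 * a2 * dy) * s
 + (c3 * dx ^+ 2 + c4 * dx * dy + c5 * dy ^+ 2) * s ^+ 2.
  move=> s hs; rewrite hv; last exact: hA.
  rewrite /seg /vadd /vscale /vsub /= /dx /dy; ring.
have e0 : seg ((a1, a2), (b1, b2)) 0 = (a1, a2) by apply: peq => /=; ring.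
have e1' : seg ((a1, a2), (b1, b2)) 1 = (b1, b2) by apply: peq => /=; ring.
move=> s hs; rewrite key //; apply: quad0.
- by rewrite -key ?e0 //; lra.
- by rewrite -key ?e1' //; lra.
- by rewrite -key //; lra.
Qed.

Lemma tedges_verts (R : realType) (t : triangle R) e :
  e \in tedges t -> (e.1 \in tverts t) && (e.2 \in tverts t).
Proof. by rewrite !inE => /or3P [] /eqP -> /=; rewrite !eqxx ?orbT. Qed.

Lemma vert_vertices (R : realType) (T : mesh R) t v :
  t \in T -> v \in tverts t -> v \in vertices T.
Proof.
move=> tT vt; rewrite /vertices mem_undup; apply/flattenP.
by exists (tverts t) => //; apply: map_f.
Qed.

Lemma mid_midpoints (R : realType) (T : mesh R) t e :
  t \in T -> e \in tedges t -> midpoint e \in midpoints T.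
Proof.
move=> tT et; rewrite /midpoints mem_undup; apply/flattenP.
exists [seq midpoint e | e <- tedges t]; first by apply/mapP; exists t.
exact: map_f.
Qed.

Lemma midpoint_rev (R : realType) (e : edge R) : midpoint (e.2, e.1) = midpoint e.
Proof. by apply: peq; rewrite /midpoint /seg /vadd /vscale /vsub /=; field. Qed.

Lemma bedges_tedges (R : realType) (T : mesh R) e :
  e \in bedges T -> exists2 t, t \in T & e \in tedges t.
Proof.
rewrite /bedges => /flattenP [s /mapP [t tT ->]].
by rewrite mem_filter => /andP [_ et]; exists t.
Qed.

Lemma cnodes_node (R : realType) (T : mesh R) GC z :
  z \in cnodes T GC -> is_node T z.
Proof.
rewrite /cnodes mem_undup mem_cat => /orP [].
  by rewrite /VhC mem_filter => /andP [_ zv]; rewrite /is_node zv.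
move=> /mapP [e]; rewrite mem_filter => /andP [_ /bedges_tedges [t tT et]] ->.
by rewrite /is_node (@mid_midpoints _ _ _ _ tT et) orbT.
Qed.

Lemma cnodes_cl (R : realType) (T : mesh R) GC z :
  z \in cnodes T GC -> closure GC z.
Proof.
rewrite /cnodes mem_undup mem_cat => /orP [].
  by rewrite /VhC mem_filter => /andP [/asboolP].
move=> /mapP [e]; rewrite mem_filter => /andP [/asboolP h _] ->.
apply: h; exists 2^-1 => //; apply/andP; split; lra.
Qed.

Lemma psi_GD (R : realType) (T : mesh R) (GD GC : set (R*R)) (psiz : R*R -> R) p :
  union_of_edges T GD -> closure GC `<=` bdry (Omega T) `\` closure GD ->
  closure GC p -> lagrange_basis T p psiz -> forall x, GD x -> psiz x = 0.
Proof.
move=> [E [HE Hcl]] hsub hp [[_ HP2] Hval] x Gx.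
have : closure GD x by apply: subset_closure.
rewrite Hcl => -[e eE [s hs xe]].
have [[t tT hedge] _] := HE e eE.
have [hv1 hv2] : (e.1 \in tverts t) /\ (e.2 \in tverts t).
  case: hedge => /tedges_verts /andP [] //= ? ?; by split.
have hmid : midpoint e \in midpoints T.
  case: hedge => h; first exact: (@mid_midpoints _ _ _ _ tT h).
  by rewrite -midpoint_rev; exact: (@mid_midpoints _ _ _ _ tT h).
have inGD : forall s', 0 <= s' <= 1 -> closure GD (seg e s').
  by move=> s' hs'; rewrite Hcl; exists e => //; exists s'.
have np : forall y, closure GD y -> y != p.
  by move=> y hy; apply/eqP => yp; have := hsub _ hp; rewrite -yp => -[_].
have seg0 : seg e 0 = e.1 by apply: peq => /=; ring.
have seg1 : seg e 1 = e.2 by apply: peq => /=; ring.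
rewrite xe; apply: (P2_seg_zero (HP2 t tT)) => //.
- move=> s' hs'; case: e {eE hedge hmid inGD seg0 seg1 xe hv1 hv2 hs} (hv1) (hv2) => a b /= ha hb.
  exact: ctri_seg (ctri_vert ha) (ctri_vert hb) hs'.
- rewrite Hval; last by rewrite /is_node (vert_vertices tT hv1).
  by rewrite ifN // np // -seg0; apply: inGD; lra.
- rewrite Hval; last by rewrite /is_node (vert_vertices tT hv2).
  by rewrite ifN // np // -seg1; apply: inGD; lra.
- rewrite Hval; last by rewrite /is_node hmid orbT.
  by rewrite ifN // np //; apply: inGD; lra.
Qed.

Theorem lemma4p3 (R : realType) (T : mesh R) (GD GN GC : set (R * R))
  (chi mu : R) (f g : R * R -> R * R)
  (uh : R * R -> R * R) (psi phi : R * R -> R * R -> R) (lam : R * R -> R * R)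
  (p : R * R) :
  (* Omega: bounded polygonal Lipschitz domain triangulated by T *)
  regular_triangulation T ->
  connected (Omega T) ->
  closure (Omega T) = mesh_union T ->
  lipschitz_domain (Omega T) ->
  (* boundary partition *)
  rel_open (bdry (Omega T)) GD -> rel_open (bdry (Omega T)) GN ->
  rel_open (bdry (Omega T)) GC ->
  GD `&` GN = set0 -> GD `&` GC = set0 -> GN `&` GC = set0 ->
  bdry (Omega T) = closure GD `|` closure GN `|` closure GC ->
  union_of_edges T GD -> union_of_edges T GN -> union_of_edges T GC ->
  GD !=set0 ->
  closure GC `<=` bdry (Omega T) `\` closure GD ->
  (* outward unit normal on Gamma_C equals e1 *)
  (forall e t, e \in bedges T -> csegm e `<=` closure GC -> t \in T ->
     has_vertex t e.1 -> has_vertex t e.2 ->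
     e.1.1 = e.2.1 /\ (forall v, v \in tverts t -> v.1 <= e.1.1)) ->
  (* material parameters and data *)
  0 < chi -> 0 < mu ->
  L2_dom (Omega T) f -> L2_bdry T GN g ->
  (* discrete contact problem *)
  Kh T GD GC uh ->
  (forall vh, Kh T GD GC vh ->
     bil_a T chi mu uh (fun x => vsub (vh x) (uh x))
       >= lin_L T GN f g (fun x => vsub (vh x) (uh x))) ->
  (* Lagrange bases psi_z of V^h and phi_z of Q^h at the contact nodes *)
  (forall z, z \in cnodes T GC -> lagrange_basis T z (psi z)) ->
  (forall z, z \in cnodes T GC -> Q_basis T GC z (phi z)) ->
  (* the discrete multiplier lambda^h *)
  Qh T GC lam ->
  (forall vh, Qh T GC vh ->
     disc_pair T GC phi lam vh
       = lin_L T GN f g (pi_h T GC psi vh) - bil_a T chi mu uh (pi_h T GC psi vh)) ->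
  (* a non actual contact node *)
  p \in cnodes T GC -> (uh p).1 != 0 ->
  disc_pair T GC phi lam (fun x => (phi p x, 0)) = 0.
Proof.
move=> _ _ _ _ _ _ _ _ _ _ _ HGD _ _ _ hsub _ _ _ _ _ Kuh HVI Hpsi Hphi _ HL pC up0.
have Kuh' := Kuh.
case: Kuh' => [[[cont1 P1] [[cont2 P2] Z]] Hc].
have up : (uh p).1 < 0 by rewrite lt_neqAle up0 Hc.
set c := - (uh p).1.
have c0 : 0 < c by rewrite /c; lra.
have [[contpsi P2psi] psival] := Hpsi p pC.
have psiGD := psi_GD HGD hsub (cnodes_cl pC) (Hpsi p pC).
have [[contphi affphi] phival] := Hphi p pC.
set X := disc_pair T GC phi lam (fun x => (phi p x, 0)).
have step : forall k, k <= c -> k * X <= 0.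
  move=> k hk.
  pose vk := fun x => ((uh x).1 + k * psi p x, (uh x).2).
  have Kv : Kh T GD GC vk.
    split; [split; [|split]|].
    - split; first exact: contw_lin.
      by move=> t tT; apply: P2_lin; [exact: P1 | exact: P2psi].
    - exact: (conj cont2 P2).
    - move=> x Gx; rewrite /vk Z // psiGD //=; apply: peq => /=; ring.
    - move=> z zC; rewrite /vk /= psival; last exact: cnodes_node zC.
      case: eqP => [->|_]; first by rewrite /c in hk; lra.
      by rewrite mulr0 addr0; exact: Hc.
  have := HVI vk Kv.
  have -> : (fun x => vsub (vk x) (uh x)) = (fun x => (k * psi p x, 0)).
    by apply: boolp.funext => x; apply: peq; rewrite /vk /vsub /=; ring.
  pose wk := fun x => (k * phi p x, 0 : R).
  have Qw : Qh T GC wk.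
    split; split.
    - exact: contw_scale.
    - move=> e he; have [a [b hab]] := affphi e he.
      by exists (k * a), (k * b) => s hs; rewrite /wk /= hab //; ring.
    - exact: contw_cst.
    - by move=> e he; exists 0, 0 => s hs /=; ring.
  have := HL wk Qw.
  have -> : pi_h T GC psi wk = (fun x => (k * psi p x, 0)).
    apply: boolp.funext => x; apply: peq; rewrite /pi_h /wk /=.
    - rewrite (bigD1_seq p) //= ?undup_uniq // phival // eqxx mulr1.
      rewrite big1_seq ?addr0 // => z /andP [zp zC].
      by rewrite phival // (negbTE zp) mulr0 mul0r.
    - by rewrite big1 // => z _; rewrite mul0r.
  have -> : disc_pair T GC phi lam wk = k * X.
    rewrite /X /disc_pair mulr_sumr; apply: eq_bigr => z _.
    by rewrite /vdot /wk /=; ring.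
  move=> -> ; lra.
have h1 : c * X <= 0 by apply: step.
have h2 : - c * X <= 0 by apply: step; lra.
have : c * X = 0 by lra.
move/eqP; rewrite mulf_eq0 => /orP [/eqP hc | /eqP //]; lra.
Qed.
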